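(* Let $n\ge2$, $\kappa\ge1$ and $G\in\mathcal G_{[n;\kappa]}$ with payoff structure vectors $V_1^c,\dots,V_n^c\in\mathbb R^{\kappa^n}$. Consider the conditions (A) $V_i^c=-V_1^c\ltimes W_{[\kappa^{i-2},\kappa]}\ltimes W_{[\kappa,\kappa^{i-1}]}$ for $i=2,\dots,n$; (B) $V_1^c\ltimes\delta_\kappa^s\ltimes\left[I_{\kappa^{n-1}}+\left(W_{[\kappa^{i-2},\kappa]}\ltimes W_{[\kappa,\kappa^{i-3}]}\right)\otimes I_{\kappa^{n-i}}\right]=0$ for all $s=1,\dots,\kappa$ and $i=3,\dots,n$. (1) If $n=2$, then $G$ is skew-symmetric if and only if (A) holds (i.e. $V_2^c=-V_1^c W_{[\kappa,\kappa]}$). (2) If $n>2$, then $G$ is skew-symmetric if and only if (A) and (B) both hold.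
   Context: Semi-tensor product: for $A\in\mathbb R^{m\times n}$, $B\in\mathbb R^{p\times q}$ and $t=\mathrm{lcm}(n,p)$, $A\ltimes B=(A\otimes I_{t/n})(B\otimes I_{t/p})$; it is associative and coincides with the Kronecker product on column vectors. Swap matrix: $W_{[m,n]}\in\mathbb R^{mn\times mn}$ is the permutation matrix with $W_{[m,n]}(X\otimes Y)=Y\otimes X$ for all $X\in\mathbb R^m$, $Y\in\mathbb R^n$ (so $W_{[1,n]}=W_{[n,1]}=I_n$). $\delta_\kappa^s$ is the $s$-th column of $I_\kappa$. A finite game $G\in\mathcal G_{[n;\kappa]}$ has players $\{1,\dots,n\}$, each with strategy set $\{1,\dots,\kappa\}$, strategy $j$ identified with $\delta_\kappa^j$, and payoffs $c_i$; $V_i^c\in\mathbb R^{\kappa^n}$ is the unique row vector with $c_i(x_1,\dots,x_n)=V_i^c\ltimes x_1\ltimes\cdots\ltimes x_n$ for all $x_j\in\{\delta_\kappa^1,\dots,\delta_\kappa^\kappa\}$. $G$ is skew-symmetric if for every permutation $\sigma\in\mathbf S_n$, every $i$ and every profile, $c_i(x_1,\dots,x_n)=\mathrm{sgn}(\sigma)\,c_{\sigma(i)}(x_{\sigma^{-1}(1)},\dots,x_{\sigma^{-1}(n)})$. *)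

(* Defs.v *)
From HB Require Import structures.
From mathcomp Require Import all_boot all_order all_algebra all_fingroup.
From mathcomp Require Import mxtens.
Set Implicit Arguments. Unset Strict Implicit. Unset Printing Implicit Defensive.
Import GRing.Theory Num.Theory.
Local Open Scope ring_scope.

Section STP.
Variable R : comNzRingType.

(* A matrix packed together with its dimensions, so that products of
   matrices with arbitrary (computed) dimensions can be formed and compared. *)
Record dmat := DM { drows : nat; dcols : nat; dmx : 'M[R]_(drows, dcols) }.

Definition dkron (A B : dmat) : dmat := DM (dmx A *t dmx B).

Definition did (k : nat) : dmat := DM (1%:M : 'M[R]_k).

(* Ordinary matrix product, when the inner dimensions agree. (Only used
   below when they provably agree; otherwise returns the first argument.) *)
Definition dmul (A B : dmat) : dmat :=
  match eqVneq (dcols A) (drows B) with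
  | EqNotNeq e => DM (dmx A *m castmx (esym e, erefl) (dmx B))
  | NeqNotEq _ => A
  end.

(* Sum of two matrices of the same size (same convention on mismatch). *)
Definition dadd (A B : dmat) : dmat :=
  match eqVneq (drows A) (drows B), eqVneq (dcols A) (dcols B) with
  | EqNotNeq e1, EqNotNeq e2 => DM (dmx A + castmx (esym e1, esym e2) (dmx B))
  | _, _ => A
  end.

Definition dopp (A : dmat) : dmat := DM (- dmx A).

(* Semi-tensor product: A |x B = (A \otimes I_{t/n}) (B \otimes I_{t/p}),
   t = lcm(n, p), A : m x n, B : p x q.  Here n*(t/n) = t = p*(t/p), so
   the ordinary product is well defined. *)
Definition stp (A B : dmat) : dmat :=
  let t := lcmn (dcols A) (drows B) in
  dmul (dkron A (did (t %/ dcols A))) (dkron B (did (t %/ drows B))).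

(* Swap matrix W_[m,n] (mn x mn): W (X \otimes Y) = Y \otimes X.
   Entry (i, j) is 1 iff, writing j = a*n + b (a < m, b < n), i = b*m + a. *)
Definition swapmx (m n : nat) : 'M[R]_(m * n) :=
  \matrix_(i, j) ((i : nat) == (j %% n) * m + j %/ n)%N%:R.
Definition dswap (m n : nat) : dmat := DM (swapmx m n).

(* delta_k^s : the s-th column of I_k (s : 'I_k is 0-based). *)
Definition ddelta (k : nat) (s : 'I_k) : dmat := DM (delta_mx s (0 : 'I_1) : 'cV[R]_k).

Definition dscal (a : R) : dmat := DM (a%:M : 'M[R]_1).

Definition dzero (A : dmat) : Prop := dmx A = 0.

End STP.

(* A finite game in G_[n; kappa]: players 'I_n (player i+1 of the paper is
   index i), strategies 'I_kappa (strategy j+1 of the paper is index j,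
   identified with delta_kappa^{j+1}), payoffs c i : profile -> R. *)
Definition profile (n kappa : nat) := 'I_n -> 'I_kappa.

Definition is_structure_vector (R : comNzRingType) (n kappa : nat)
  (ci : profile n kappa -> R) (V : 'rV[R]_(kappa ^ n)) : Prop :=
  forall x : profile n kappa,
    foldl (@stp R) (DM V) [seq ddelta R (x j) | j <- enum 'I_n] = dscal (ci x).

Definition skew_symmetric (R : comNzRingType) (n kappa : nat)
  (c : 'I_n -> profile n kappa -> R) : Prop :=
  forall (sigma : 'S_n) (i : 'I_n) (x : profile n kappa),
    c i x = (-1) ^+ odd_perm sigma * c (sigma i) (fun j => x (sigma^-1 j)%g).

(* Main.v *)
Require Import Defs.
From HB Require Import structures.
From mathcomp Require Import all_boot all_order all_algebra all_fingroup.
From mathcomp Require Import mxtens.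
From mathcomp Require Import zify.
From Stdlib Require Import FunctionalExtensionality.
Import GRing.Theory Num.Theory.
Local Open Scope ring_scope.
Set Implicit Arguments. Unset Strict Implicit. Unset Printing Implicit Defensive.

Section Dent.
Variable R : comNzRingType.

Definition dent (D : dmat R) (i j : nat) : R :=
  \sum_(a < drows D) \sum_(b < dcols D)
     ((nat_of_ord a == i) && (nat_of_ord b == j))%:R * dmx D a b.

Lemma dent_ord r c (M : 'M[R]_(r, c)) (a : 'I_r) (b : 'I_c) :
  dent (DM M) a b = M a b.
Proof.
rewrite /dent /= (bigD1 a) //= (bigD1 b) //= !eqxx mul1r.
rewrite big1 ?addr0; last first.
  by move=> b' hb; rewrite andTb (inj_eq val_inj) (negbTE hb) mul0r.
rewrite big1 ?addr0 // => a' ha; rewrite big1 // => b' _.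
by rewrite (inj_eq val_inj) (negbTE ha) mul0r.
Qed.

Lemma dent_out r c (M : 'M[R]_(r, c)) i j :
  ~~ ((i < r) && (j < c))%N -> dent (DM M) i j = 0.
Proof.
move=> h; rewrite /dent /= big1 // => a _; rewrite big1 // => b _.
case: eqP => ai; case: eqP => bj /=; rewrite ?mul0r //.
by move: h; rewrite -ai -bj !ltn_ord.
Qed.

Lemma dent_in r c (M : 'M[R]_(r, c)) i j (hi : (i < r)%N) (hj : (j < c)%N) :
  dent (DM M) i j = M (Ordinal hi) (Ordinal hj).
Proof. by rewrite -dent_ord. Qed.

Lemma dent_rows (D : dmat R) i j : (drows D <= i)%N -> dent D i j = 0.
Proof. by case: D => r c M /= h; rewrite dent_out // negb_and -leqNgt h. Qed.

Lemma dent_cols (D : dmat R) i j : (dcols D <= j)%N -> dent D i j = 0.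
Proof. by case: D => r c M /= h; rewrite dent_out // negb_and -!leqNgt h orbT. Qed.

Lemma dmat_ext (D1 D2 : dmat R) : drows D1 = drows D2 -> dcols D1 = dcols D2 ->
  (forall i j, (i < drows D1)%N -> (j < dcols D1)%N -> dent D1 i j = dent D2 i j) ->
  D1 = D2.
Proof.
case: D1 => r1 c1 M1; case: D2 => r2 c2 M2 /= er ec h; subst.
congr DM; apply/matrixP => i j; rewrite -!dent_ord; exact: h.
Qed.

Lemma dzeroP (D : dmat R) : dzero D <->
  (forall i j, (i < drows D)%N -> (j < dcols D)%N -> dent D i j = 0).
Proof.
case: D => r c M; rewrite /dzero /=; split.
  by move=> -> i j hi hj; rewrite dent_in mxE.
by move=> h; apply/matrixP => i j; rewrite mxE -dent_ord h.
Qed.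

Lemma dkronE (A B : dmat R) i j :
  dent (dkron A B) i j = dent A (i %/ drows B) (j %/ dcols B)
                         * dent B (i %% drows B) (j %% dcols B).
Proof.
case: A => ra ca A; case: B => rb cb B; rewrite /dkron /=.
case: (boolP ((i < ra * rb) && (j < ca * cb))%N) => h.
  case/andP: h => hi hj; rewrite (dent_in _ hi hj) mxE.
  by rewrite -!dent_ord.
rewrite dent_out //; rewrite negb_and in h; case/orP: h => h.
  case: (posnP rb) => [rb0|rb0]; first by rewrite [dent (DM B) _ _]dent_out ?mulr0 // rb0 ltn0.
  by rewrite [dent (DM A) _ _]dent_out ?mul0r // ltn_divLR // (negbTE h).
case: (posnP cb) => [cb0|cb0]; first by rewrite [dent (DM B) _ _]dent_out ?mulr0 // cb0 ltn0 andbF.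
by rewrite [dent (DM A) _ _]dent_out ?mul0r // [(j %/ _ < _)%N]ltn_divLR // (negbTE h) andbF.
Qed.

Lemma dmulE (A B : dmat R) i j : dcols A = drows B ->
  dent (dmul A B) i j = \sum_(k < dcols A) dent A i k * dent B k j.
Proof.
case: A => ra ca A; case: B => rb cb B /= e; subst.
rewrite /dmul /=; case: eqVneq => [e|]; last by rewrite eqxx.
have -> : e = erefl by apply: eq_irrelevance.
rewrite castmx_id.
case: (boolP ((i < ra) && (j < cb))%N) => h.
  case/andP: h => hi hj; rewrite (dent_in _ hi hj) mxE.
  by apply: eq_bigr => k _; rewrite -!dent_ord.
rewrite dent_out // big1 // => k _; rewrite negb_and in h; case/orP: h => h.
  by rewrite dent_out ?mul0r // negb_and h.
by rewrite [dent (DM B) _ _]dent_out ?mulr0 // negb_and h orbT.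
Qed.

Lemma daddE (A B : dmat R) i j : drows A = drows B -> dcols A = dcols B ->
  dent (dadd A B) i j = dent A i j + dent B i j.
Proof.
case: A => ra ca A; case: B => rb cb B /= e1 e2; subst.
rewrite /dadd /=; case: eqVneq => [e|]; last by rewrite eqxx.
case: eqVneq => [e'|]; last by rewrite eqxx.
have -> : e = erefl by apply: eq_irrelevance.
have -> : e' = erefl by apply: eq_irrelevance.
rewrite castmx_id.
case: (boolP ((i < rb) && (j < cb))%N) => h.
  case/andP: h => hi hj; rewrite !(dent_in _ hi hj) mxE //.
by rewrite !dent_out // addr0.
Qed.

Lemma doppE (A : dmat R) i j : dent (dopp A) i j = - dent A i j.
Proof.
case: A => r c A; rewrite /dopp /=.
case: (boolP ((i < r) && (j < c))%N) => h.
  by case/andP: h => hi hj; rewrite !(dent_in _ hi hj) mxE.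
by rewrite !dent_out // oppr0.
Qed.

Lemma didE k i j : dent (did R k) i j = ((i == j) && (i < k)%N)%:R.
Proof.
rewrite /did.
case: (boolP ((i < k) && (j < k))%N) => h.
  by case/andP: h => hi hj; rewrite (dent_in _ hi hj) mxE /= hi andbT.
rewrite dent_out //; case: eqP h => // -> ; rewrite andbb => /negbTE ->.
by rewrite andbF.
Qed.

Lemma ddeltaE k (s : 'I_k) i j : dent (ddelta R s) i j = ((i == s) && (j == 0%N))%:R.
Proof.
rewrite /ddelta.
case: (boolP ((i < k) && (j < 1))%N) => h.
  by case/andP: h => hi hj; rewrite (dent_in _ hi hj) mxE.
rewrite dent_out //; case: eqP h => // ->; rewrite ltn_ord /=; case: eqP => // -> //.
Qed.



Lemma sum_pick N (F : nat -> R) m : (m < N)%N ->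
  \sum_(k < N) F k * ((nat_of_ord k == m)%:R) = F m.
Proof.
move=> hm; rewrite (bigD1 (Ordinal hm)) //= eqxx mulr1 big1 ?addr0 // => k hk.
have -> : (nat_of_ord k == m) = false.
  by apply/negbTE; move: hk; apply: contra => /eqP e; apply/eqP/val_inj.
by rewrite mulr0.
Qed.

Lemma divmod_eq (k a b q : nat) : (b < q)%N ->
  (k == a * q + b)%N = (k %/ q == a)%N && (k %% q == b)%N.
Proof.
move=> hb; have q0 : (0 < q)%N by apply: leq_ltn_trans hb.
apply/eqP/andP => [->|[/eqP <- /eqP <-]]; last by rewrite -divn_eq.
by rewrite divnMDl // divn_small // addn0 modnMDl modn_small.
Qed.

Lemma lt_mulD a b p q : (a < p)%N -> (b < q)%N -> (a * q + b < p * q)%N.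
Proof. by move=> ha hb; exact: (mxtens_index_proof (Ordinal ha, Ordinal hb)). Qed.

Definition pmr (r c : nat) (f : nat -> nat) (B : dmat R) : Prop :=
  [/\ drows B = r, dcols B = c, (forall j, (j < c)%N -> (f j < r)%N) &
      (forall k j, (k < r)%N -> (j < c)%N -> dent B k j = (k == f j)%:R)].

Lemma pmr_ext r c f r' c' f' B : pmr r c f B -> r = r' -> c = c' ->
  (forall j, (j < c)%N -> f j = f' j) -> pmr r' c' f' B.
Proof.
move=> [h1 h2 h3 h4] <- <- e; split=> // [j hj|k j hk hj]; rewrite -e //; auto.
Qed.

Lemma dmul_rows (A B : dmat R) : drows (dmul A B) = drows A.
Proof. by rewrite /dmul; case: eqVneq. Qed.

Lemma dmul_cols (A B : dmat R) : dcols A = drows B -> dcols (dmul A B) = dcols B.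
Proof. by rewrite /dmul => e; case: eqVneq => //; rewrite e eqxx. Qed.

Lemma pmr_mul a b c f g A B : pmr a b f A -> pmr b c g B -> pmr a c (f \o g) (dmul A B).
Proof.
move=> [ra ca fa ha] [rb cb fb hb]; split.
- by rewrite dmul_rows.
- by rewrite dmul_cols // ca rb.
- by move=> j hj /=; apply: fa; apply: fb.
move=> k j hk hj; rewrite dmulE ?ca ?rb //.
under eq_bigr => q _ do rewrite (ha _ _ hk (ltn_ord q)) (hb _ _ (ltn_ord q) hj).
by rewrite (sum_pick (fun q => (k == f q)%:R)) //; apply: fb.
Qed.

Lemma dkron1 (A : dmat R) i j : dent (dkron A (did R 1)) i j = dent A i j.
Proof. by rewrite dkronE /= !divn1 !modn1 didE /= mulr1. Qed.

Lemma pmr_kron r c f B q : pmr r c f B -> (0 < q)%N ->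
  pmr (r * q) (c * q) (fun j => f (j %/ q) * q + j %% q)%N (dkron B (did R q)).
Proof.
move=> [rb cb fb hb] q0; split.
- by rewrite /= rb.
- by rewrite /= cb.
- move=> j hj; apply: lt_mulD; last by rewrite ltn_mod.
  by apply: fb; rewrite ltn_divLR.
move=> k j hk hj; rewrite dkronE /=.
rewrite hb ?ltn_divLR // didE ltn_mod q0 andbT.
by rewrite -natrM mulnb divmod_eq ?ltn_mod.
Qed.

Lemma pmr_swap m n : (0 < m)%N -> (0 < n)%N ->
  pmr (m * n) (m * n) (fun j => (j %% n) * m + j %/ n)%N (dswap R m n).
Proof.
move=> m0 n0; split=> //.
- move=> j hj; rewrite [(m * n)%N]mulnC; apply: lt_mulD; first by rewrite ltn_mod.
  by rewrite ltn_divLR.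
by move=> k j hk hj; rewrite /dswap dent_in mxE.
Qed.

Lemma pmr_delta k (s : 'I_k) : pmr k 1 (fun _ => nat_of_ord s) (ddelta R s).
Proof.
split => //.
by move=> a j ha hj; rewrite ddeltaE; case: j hj => // _; rewrite andbT.
Qed.

Lemma stp_row_pmr A N r c f B : drows A = 1%N -> dcols A = N -> pmr r c f B ->
  (r %| N)%N -> (0 < r)%N -> (0 < N)%N ->
  [/\ drows (stp A B) = 1%N, dcols (stp A B) = (c * (N %/ r))%N,
   (forall j, (j < c * (N %/ r))%N -> (f (j %/ (N %/ r)) * (N %/ r) + j %% (N %/ r) < N)%N) &
   forall i j, (j < c * (N %/ r))%N -> dent (stp A B) i j =
     dent A i (f (j %/ (N %/ r)) * (N %/ r) + j %% (N %/ r))%N].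
Proof.
move=> ra ca hB rN r0 N0; have [rb cb fb hb] := hB.
have q0 : (0 < N %/ r)%N by rewrite divn_gt0 // dvdn_leq.
have hK := pmr_kron hB q0; rewrite [(r * _)%N]mulnC divnK // in hK.
have [rk ck fk hk] := hK.
rewrite /stp ca rb (lcmn_idPl rN) divnn N0; split => //.
- by rewrite dmul_rows /= ra.
- by rewrite dmul_cols /= ?cb // ca rb muln1 mulnC divnK.
move=> i j hj; rewrite dmulE /=; last by rewrite ca rb muln1 mulnC divnK.
rewrite ca muln1.
under eq_bigr => k _ do rewrite dkron1 (hk _ _ (ltn_ord k) hj).
by rewrite sum_pick //; apply: fk.
Qed.

Lemma stp_sq A B N : dcols A = N -> drows B = N -> (0 < N)%N ->
  [/\ drows (stp A B) = drows A, dcols (stp A B) = dcols B &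
   forall i j, dent (stp A B) i j = \sum_(k < N) dent A i k * dent B k j].
Proof.
move=> ca rb N0; rewrite /stp ca rb (lcmn_idPl (dvdnn N)) divnn N0; split.
- by rewrite dmul_rows /= muln1.
- by rewrite dmul_cols /= ?muln1 // ca rb.
move=> i j; rewrite dmulE /= ?ca ?rb // muln1.
by apply: eq_bigr => k _; rewrite !dkron1.
Qed.

Lemma stp_pm p f A r g B : pmr p p f A -> pmr r r g B -> (r %| p)%N -> (0 < r)%N -> (0 < p)%N ->
  pmr p p (fun j => f (g (j %/ (p %/ r)) * (p %/ r) + j %% (p %/ r)))%N (stp A B).
Proof.
move=> hA hB rp r0 p0; have [ra ca fa ha] := hA; have [rb cb fb hb] := hB.
have q0 : (0 < p %/ r)%N by rewrite divn_gt0 // dvdn_leq.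
have hK := pmr_kron hB q0; rewrite [(r * _)%N]mulnC divnK // in hK.
have hA1 := pmr_kron hA (ltnSn 0); rewrite muln1 in hA1.
rewrite /stp ca rb (lcmn_idPl rp) divnn p0.
have hM := pmr_mul hA1 hK.
apply: (pmr_ext hM); rewrite ?muln1 // => j hj /=.
by rewrite divn1 modn1 muln1 addn0.
Qed.

End Dent.


Section Idx.
Variable k : nat.
Hypothesis k0 : (0 < k)%N.

Definition idx (l : seq nat) : nat := foldl (fun a d => a * k + d)%N 0%N l.

Lemma foldl_idx a l : foldl (fun a d => a * k + d)%N a l = (a * k ^ size l + idx l)%N.
Proof.
rewrite /idx; elim: l a => [|d l IH] a /=; first by rewrite muln1 addn0.
by rewrite IH [in RHS]IH add0n mulnDl expnS addnA mulnA.
Qed.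

Lemma idx_cat l1 l2 : idx (l1 ++ l2) = (idx l1 * k ^ size l2 + idx l2)%N.
Proof. by rewrite {1}/idx foldl_cat foldl_idx. Qed.

Lemma idx_cons d l : idx (d :: l) = (d * k ^ size l + idx l)%N.
Proof. by rewrite -cat1s idx_cat. Qed.

Definition digs (l : seq nat) := all (fun d => d < k)%N l.

Lemma idx_lt l : digs l -> (idx l < k ^ size l)%N.
Proof.
elim: l => [|d l IH] /=; first by rewrite expn0.
case/andP => hd hl; rewrite idx_cons expnS; apply: lt_mulD => //; exact: IH.
Qed.

Lemma idx_div P T : digs T -> (idx (P ++ T) %/ k ^ size T)%N = idx P.
Proof.
move=> hT; rewrite idx_cat divnMDl ?expn_gt0 ?k0 // divn_small ?addn0 //; exact: idx_lt.
Qed.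

Lemma idx_mod P T : digs T -> (idx (P ++ T) %% k ^ size T)%N = idx T.
Proof. by move=> hT; rewrite idx_cat modnMDl modn_small //; exact: idx_lt. Qed.

Lemma sw_cat P Q : digs P -> digs Q ->
  ((idx (P ++ Q) %% k ^ size Q) * k ^ size P + idx (P ++ Q) %/ k ^ size Q)%N
  = idx (Q ++ P).
Proof. by move=> hP hQ; rewrite idx_mod // idx_div // idx_cat. Qed.

Lemma F_cat (f : nat -> nat) P P' T : digs T -> f (idx P) = idx P' ->
  (f (idx (P ++ T) %/ k ^ size T) * k ^ size T + idx (P ++ T) %% k ^ size T)%N
  = idx (P' ++ T).
Proof. by move=> hT e; rewrite idx_div // idx_mod // e idx_cat. Qed.

Lemma idx_surj L j : (j < k ^ L)%N -> exists l, [/\ size l = L, digs l & idx l = j].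
Proof.
elim: L j => [|L IH] j hj.
  by exists [::]; move: hj; rewrite expn0 ltnS leqn0 => /eqP ->.
have hj' : (j %/ k < k ^ L)%N by rewrite ltn_divLR // -expnSr.
have [l [sl dl il]] := IH (j %/ k)%N hj'.
exists (rcons l (j %% k)%N); split.
- by rewrite size_rcons sl.
- by rewrite /digs all_rcons ltn_mod k0.
by rewrite -cats1 idx_cat il /= expn1 /idx /= -divn_eq.
Qed.

End Idx.

Lemma cat_digs k P Q : digs k P -> digs k Q -> digs k (P ++ Q).
Proof. by rewrite /digs all_cat => -> ->. Qed.

Lemma idx1 k x : idx k [:: x] = x.
Proof. by rewrite /idx /= mul0n add0n. Qed.


Section Prof.
Variables n k : nat.
Hypothesis k0 : (0 < k)%N.

Definition yv (y : profile n k) (j : nat) : nat :=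
  match (insub j : option 'I_n) with Some j' => nat_of_ord (y j') | None => 0%N end.

Lemma yv_in y j (hj : (j < n)%N) : yv y j = y (Ordinal hj).
Proof. by rewrite /yv insubT. Qed.

Lemma yvE y (j : 'I_n) : yv y j = y j.
Proof. by case: j => j hj; rewrite yv_in. Qed.

Lemma yv_lt y j : (yv y j < k)%N.
Proof. by rewrite /yv; case: insub => [j'|] //; exact: ltn_ord. Qed.

Definition xs (y : profile n k) := map (yv y) (iota 0 n).

Lemma size_xs y : size (xs y) = n.
Proof. by rewrite size_map size_iota. Qed.

Lemma digs_xs y : digs k (xs y).
Proof. by apply/allP => d /mapP [j _ ->]; exact: yv_lt. Qed.

Lemma xs_enum y : [seq nat_of_ord (y j) | j <- enum 'I_n] = xs y.
Proof. by rewrite /xs -val_enum_ord -map_comp; apply: eq_map => j /=; rewrite yvE. Qed.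

Lemma xs_surj l : size l = n -> digs k l -> exists y, xs y = l.
Proof.
move=> sl dl.
exists (fun j : 'I_n => Ordinal (ltn_pmod (nth 0%N l j) k0)).
apply: (@eq_from_nth _ 0%N); first by rewrite size_xs.
move=> j; rewrite size_xs => hj.
rewrite /xs (nth_map 0%N) ?size_iota // nth_iota // add0n yv_in /= modn_small //.
by apply: (allP dl); apply: mem_nth; rewrite sl.
Qed.

Lemma iota_split a b : (a < b)%N -> (b < n)%N ->
  iota 0 n = iota 0 a ++ a :: iota a.+1 (b - a.+1) ++ b :: iota b.+1 (n - b.+1).
Proof.
move=> ab bn.
have -> : n = (a + ((b - a.+1).+1 + (n - b.+1).+1))%N by lia.
rewrite iotaD add0n iotaD /=.
have -> : (a + (b - a.+1).+1)%N = b by lia.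
congr (_ ++ _ :: _); congr (_ ++ _); congr (_ :: iota _ _); lia.
Qed.

Lemma xs_split y a b : (a < b)%N -> (b < n)%N ->
  xs y = map (yv y) (iota 0 a) ++ yv y a :: map (yv y) (iota a.+1 (b - a.+1))
         ++ yv y b :: map (yv y) (iota b.+1 (n - b.+1)).
Proof. by move=> ab bn; rewrite /xs (iota_split ab bn) map_cat /= map_cat. Qed.

Lemma xs_split_t y (A B : 'I_n) : (A < B)%N ->
  xs (fun j => y (tperm A B j)) =
     map (yv y) (iota 0 A) ++ yv y B :: map (yv y) (iota A.+1 (B - A.+1))
         ++ yv y A :: map (yv y) (iota B.+1 (n - B.+1)).
Proof.
move=> ab; have bn := ltn_ord B.
have e : forall j (hj : (j < n)%N), A != Ordinal hj -> B != Ordinal hj ->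
    yv (fun j => y (tperm A B j)) j = yv y j.
  by move=> j hj hA hB; rewrite !yv_in tpermD.
rewrite (xs_split _ ab bn) !yvE tpermL tpermR -!yvE.

congr (_ ++ _ :: _ ++ _ :: _);
  apply/eq_in_map => j; rewrite mem_iota => /andP [h1 h2];
  (have hj : (j < n)%N by lia);
  rewrite (e j hj) //; apply/negP => /eqP/(congr1 val) /=; lia.
Qed.

End Prof.


Section Fold.
Variable R : comNzRingType.
Variable k : nat.
Hypothesis k0 : (0 < k)%N.

Lemma dscal_dent (a : R) : dent (dscal a) 0 0 = a.
Proof. by rewrite /dscal (@dent_in _ 1 1 _ 0 0 isT isT) mxE mulr1n. Qed.

Lemma dscal_inj (a b : R) : dscal a = dscal b -> a = b.
Proof. by move/(congr1 (fun D => dent D 0 0)); rewrite !dscal_dent. Qed.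

Lemma fold_delta (ss : seq 'I_k) (A : dmat R) : drows A = 1%N -> dcols A = (k ^ size ss)%N ->
  foldl (@stp R) A [seq ddelta R s | s <- ss] =
  dscal (dent A 0 (idx k [seq nat_of_ord s | s <- ss])).
Proof.
elim: ss A => [|s ss IH] A ra ca /=.
  apply: dmat_ext => //; rewrite ?ca ?ra // => i j; rewrite !ltnS !leqn0 => /eqP -> /eqP ->.
  by rewrite dscal_dent.
have kd : (k %| k ^ size (s :: ss))%N by rewrite /= expnS dvdn_mulr.
have N0 : (0 < k ^ size (s :: ss))%N by rewrite expn_gt0 k0.
have [r1 c1 f1 e1] := stp_row_pmr ra ca (pmr_delta R s) kd k0 N0.
have qE : (k ^ size (s :: ss) %/ k)%N = (k ^ size ss)%N by rewrite /= expnS mulKn.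
rewrite qE mul1n in c1 e1; rewrite qE in f1.
have hd : digs k [seq nat_of_ord s | s <- ss] by apply/allP => d /mapP [x _ ->].
have hlt := idx_lt hd; rewrite size_map in hlt.
rewrite (IH _ r1 c1) e1 // modn_small //.
by rewrite idx_cons size_map.
Qed.
End Fold.

Lemma dadd_rows (R : comNzRingType) (A B : dmat R) : drows (dadd A B) = drows A.
Proof. by rewrite /dadd; case: (eqVneq (drows A) (drows B)) => ?; case: (eqVneq (dcols A) (dcols B)). Qed.
Lemma dadd_cols (R : comNzRingType) (A B : dmat R) : dcols (dadd A B) = dcols A.
Proof. by rewrite /dadd; case: (eqVneq (drows A) (drows B)) => ?; case: (eqVneq (dcols A) (dcols B)). Qed.

Section Game.
Variable R : realFieldType.
Variables n k : nat.
Hypothesis hn : (2 <= n)%N.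
Hypothesis k0 : (0 < k)%N.
Variable c : 'I_n -> profile n k -> R.
Variable V : 'I_n -> 'rV[R]_(k ^ n).
Hypothesis hV : forall i, is_structure_vector (c i) (V i).

Lemma cE i x : c i x = dent (DM (V i)) 0 (idx k (xs x)).
Proof.
have := hV i x.
have -> : [seq ddelta R (x j) | j <- enum 'I_n] = [seq ddelta R s | s <- map x (enum 'I_n)].
  by rewrite -map_comp.
rewrite fold_delta //; last by rewrite size_map size_enum_ord.
by move/dscal_inj => <-; rewrite -map_comp xs_enum.
Qed.

Lemma vv_surj (i : 'I_n) j : (j < k ^ n)%N -> exists y, dent (DM (V i)) 0 j = c i y /\ idx k (xs y) = j.
Proof.
move=> hj; have [l [sl dl il]] := idx_surj k0 hj.
have [y hy] := xs_surj k0 sl dl.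
by exists y; rewrite cE hy il.
Qed.


Lemma kpos m : (0 < k ^ m)%N.
Proof. by rewrite expn_gt0 k0. Qed.

Lemma condA_iff (i0 i : 'I_n) (h0 : nat_of_ord i0 = 0%N) (hi : (1 <= i)%N) :
  DM (V i) = dopp (stp (stp (DM (V i0)) (dswap R (k ^ (i.+1 - 2)) k))
                       (dswap R k (k ^ (i.+1 - 1))))
  <-> forall y, c i y = - c i0 (fun j => y (tperm i0 i j)).
Proof.
have -> : (i.+1 - 2 = i - 1)%N by lia.
have -> : (i.+1 - 1 = i)%N by lia.
have hin := ltn_ord i.
have P1 := pmr_swap R (kpos (i - 1)) k0.
have hr1 : (k ^ (i - 1) * k = k ^ i)%N by rewrite -expnSr; congr (_ ^ _)%N; lia.
rewrite hr1 in P1.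
have d1 : (k ^ i %| k ^ n)%N by rewrite dvdn_exp2l // ltnW.
have [r1 c1 f1 e1] := @stp_row_pmr R (DM (V i0)) (k ^ n)%N _ _ _ _ erefl erefl P1 d1 (kpos _) (kpos _).
rewrite mulnC divnK // in c1.
have P2 := pmr_swap R k0 (kpos i).
have hr2 : (k * k ^ i = k ^ i.+1)%N by rewrite expnS.
rewrite hr2 in P2.
have d2 : (k ^ i.+1 %| k ^ n)%N by rewrite dvdn_exp2l.
have [r2 c2 f2 e2] := stp_row_pmr r1 c1 P2 d2 (kpos _) (kpos _).
rewrite mulnC divnK // in c2.
rewrite mulnC divnK // in e2 f2.
rewrite [(k ^ i * _)%N]mulnC divnK // in e1 f1.
rewrite -(expnB k0 (ltnW hin)) in e1 f1.
rewrite -(expnB k0 hin) in e2 f2.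
have key : forall y : profile n k, let j := idx k (xs y) in
  let j2 := (((j %/ k ^ (n - i.+1)) %% k ^ i * k + (j %/ k ^ (n - i.+1)) %/ k ^ i)
            * k ^ (n - i.+1) + j %% k ^ (n - i.+1))%N in
  (((j2 %/ k ^ (n - i)) %% k * k ^ (i - 1) + (j2 %/ k ^ (n - i)) %/ k) * k ^ (n - i)
   + j2 %% k ^ (n - i))%N = idx k (xs (fun j => y (tperm i0 i j))).
  move=> y /=.
  have hlt : (i0 < i)%N by rewrite h0.
  rewrite (xs_split_t k0 y hlt) (xs_split k0 y hi hin) h0 /=.
  set g := yv y.
  set M := map g (iota 1 (i - 1)).
  set T := map g (iota i.+1 (n - i.+1)).
  have dM : digs k M by apply/allP => d /mapP [x _ ->] /=; exact: (yv_lt k0 y x).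
  have dT : digs k T by apply/allP => d /mapP [x _ ->] /=; exact: (yv_lt k0 y x).
  have sM : size M = (i - 1)%N by rewrite size_map size_iota.
  have sT : size T = (n - i.+1)%N by rewrite size_map size_iota.
  have q1E : (n - i = size (g 0%N :: T))%N by rewrite /= sT; lia.
  rewrite q1E -sT.
  rewrite (_ : g 0%N :: M ++ g i :: T = ([:: g 0%N] ++ M ++ [:: g (nat_of_ord i)]) ++ T); last by rewrite -!catA.
  have dg : forall x, digs k [:: g x] by move=> x; rewrite /digs /= (yv_lt k0 y).
  rewrite (@F_cat k k0 (fun m => m %% k ^ i * k + m %/ k ^ i)%N _ ((M ++ [:: g (nat_of_ord i)]) ++ [:: g 0%N]) T dT); last first.
    have h := sw_cat k0 (dg 0%N) (cat_digs dM (dg (nat_of_ord i))).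
    rewrite size_cat sM /= expn1 in h.
    by rewrite (_ : (i - 1 + 1 = i)%N) in h; [exact h | lia].
  rewrite (_ : ((M ++ [:: g (nat_of_ord i)]) ++ [:: g 0%N]) ++ T = (M ++ [:: g (nat_of_ord i)]) ++ (g 0%N :: T)); last by rewrite -!catA.
  rewrite (@F_cat k k0 (fun m => m %% k * k ^ (i - 1) + m %/ k)%N _ (g (nat_of_ord i) :: M) (g 0%N :: T)) //.
    by rewrite /digs /= (yv_lt k0 y).
  have := sw_cat k0 dM (dg (nat_of_ord i)).
  by rewrite /= expn1 sM.
have hlt : forall y : profile n k, (idx k (xs y) < k ^ n)%N.
  by move=> y; have := idx_lt (digs_xs k0 y); rewrite size_xs.
split.
  move=> hA y; rewrite !cE.
  have := congr1 (fun D => dent D 0 (idx k (xs y))) hA => /= ->.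
  by rewrite doppE e2 // e1 ?f2 // key.
move=> hA; apply: dmat_ext => /=; first by rewrite r2.
  by rewrite c2.
move=> a j; rewrite ltnS leqn0 => /eqP -> hj.
rewrite doppE e2 // e1 ?f2 //.
have [y [hy ej]] := vv_surj i hj.
by rewrite hy hA cE -ej key.
Qed.

Lemma condB_pt (i0 i1 m : 'I_n) (h0 : nat_of_ord i0 = 0%N) (h1 : nat_of_ord i1 = 1%N)
  (i : nat) (hi : (3 <= i <= n)%N) (hm : nat_of_ord m = i.-1) :
  (forall s : 'I_k, dzero (stp (stp (DM (V i0)) (ddelta R s))
                 (dadd (did R (k ^ (n - 1)))
                       (dkron (stp (dswap R (k ^ (i - 2)) k)
                                   (dswap R k (k ^ (i - 3))))
                              (did R (k ^ (n - i)))))))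
  <-> forall y, c i0 y = - c i0 (fun j => y (tperm i1 m j)).
Proof.
case/andP: hi => hi3 hin.
have n1 : (1 <= n)%N by lia.
have qE : (k ^ n %/ k = k ^ (n - 1))%N by rewrite -{2}(expn1 k) -expnB.
have PW1 := pmr_swap R (kpos (i - 2)) k0.
have PW2 := pmr_swap R k0 (kpos (i - 3)).
rewrite (_ : (k ^ (i - 2) * k = k ^ (i - 1))%N) in PW1; last by rewrite -expnSr; congr (_ ^ _)%N; lia.
rewrite (_ : (k * k ^ (i - 3) = k ^ (i - 2))%N) in PW2; last by rewrite -expnS; congr (_ ^ _)%N; lia.
have d12 : (k ^ (i - 2) %| k ^ (i - 1))%N by rewrite dvdn_exp2l //; lia.
have P12 := stp_pm PW1 PW2 d12 (kpos _) (kpos _).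
rewrite -expnB // in P12; last by lia.
rewrite (_ : (i - 1 - (i - 2) = 1)%N) ?expn1 in P12; last by lia.
have PK := pmr_kron P12 (kpos (n - i)).
rewrite -expnD (_ : (i - 1 + (n - i) = n - 1)%N) in PK; last by lia.
move: PK; set F := (fun j : nat => _) => PK.
have [rK cK fK eK] := PK.
set C := dadd _ _.
have rC : drows C = (k ^ (n - 1))%N by rewrite /C dadd_rows.
have cC : dcols C = (k ^ (n - 1))%N by rewrite /C dadd_cols.
have eC : forall q j, (q < k ^ (n - 1))%N -> (j < k ^ (n - 1))%N ->
    dent C q j = ((q == j) && (q < k ^ (n - 1))%N)%:R + (q == F j)%:R.
  by move=> q j hq hj; rewrite /C daddE ?didE ?eK // rK.
have hS1 : forall s : 'I_k, [/\ drows (stp (DM (V i0)) (ddelta R s)) = 1%N,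
   dcols (stp (DM (V i0)) (ddelta R s)) = (k ^ (n - 1))%N &
   forall j, (j < k ^ (n - 1))%N -> dent (stp (DM (V i0)) (ddelta R s)) 0 j =
      dent (DM (V i0)) 0 (s * k ^ (n - 1) + j)%N].
  move=> s; have kd : (k %| k ^ n)%N by rewrite -{1}(expn1 k) dvdn_exp2l.
  have [r1 c1 f1 e1] := @stp_row_pmr R (DM (V i0)) (k ^ n)%N _ _ _ _ erefl erefl (pmr_delta R s) kd k0 (kpos _).
  rewrite qE mul1n in c1 e1; split => // j hj.
  by rewrite e1 // modn_small.
have hS : forall s : 'I_k, forall j, (j < k ^ (n - 1))%N ->
   dent (stp (stp (DM (V i0)) (ddelta R s)) C) 0 j =
   dent (DM (V i0)) 0 (s * k ^ (n - 1) + j)%N + dent (DM (V i0)) 0 (s * k ^ (n - 1) + F j)%N.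
  move=> s j hj; have [r1 c1 e1] := hS1 s.
  have [_ _ ->] := stp_sq c1 rC (kpos _).
  under eq_bigr => q _ do rewrite (eC _ _ (ltn_ord q) hj) ltn_ord andbT mulrDr.
  rewrite big_split /= (sum_pick (fun q => dent (stp (DM (V i0)) (ddelta R s)) 0 q)) //.
  rewrite (sum_pick (fun q => dent (stp (DM (V i0)) (ddelta R s)) 0 q)) ?fK //.
  by rewrite !e1 ?fK.
have key : forall y : profile n k, exists J, [/\ (J < k ^ (n - 1))%N,
    idx k (xs y) = (yv y 0 * k ^ (n - 1) + J)%N &
    idx k (xs (fun j => y (tperm i1 m j))) = (yv y 0 * k ^ (n - 1) + F J)%N].
  move=> y.
  have hlt : (i1 < m)%N by rewrite h1 hm; lia.
  have h1m : (1 < m)%N by rewrite hm; lia.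
  rewrite (xs_split_t k0 y hlt) (xs_split k0 y h1m (ltn_ord m)) h1 /=.
  set g := yv y.
  set M := map g (iota 2 (m - 2)).
  set T := map g (iota m.+1 (n - m.+1)).
  have dM : digs k M by apply/allP => d /mapP [x _ ->] /=; exact: (yv_lt k0 y x).
  have dT : digs k T by apply/allP => d /mapP [x _ ->] /=; exact: (yv_lt k0 y x).
  have sM : size M = (i - 3)%N by rewrite size_map size_iota hm; lia.
  have sT : size T = (n - i)%N by rewrite size_map size_iota hm; lia.
  have dg : forall x, digs k [:: g x] by move=> x; rewrite /digs /= (yv_lt k0 y).
  have se : forall a b, size (a :: M ++ b :: T) = (n - 1)%N.
    by move=> a b /=; rewrite size_cat /= sM sT; lia.
  exists (idx k (g 1%N :: M ++ g m :: T)); split.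
  - rewrite -(se (g 1%N) (g m)); apply: idx_lt.
    by rewrite /digs /= (yv_lt k0 y) /=; apply: (cat_digs dM); rewrite /digs /= (yv_lt k0 y).
  - by rewrite idx_cons se.
  rewrite idx_cons se; congr (_ + _)%N.
  rewrite /F -sT.
  have hdivG : forall Q x, digs k Q -> (x < k)%N -> (idx k (Q ++ [:: x]) %/ k = idx k Q)%N.
    by move=> Q x _ hx; rewrite idx_cat /= expn1 idx1 divnMDl // divn_small // addn0.
  have hmodG : forall Q x, digs k Q -> (x < k)%N -> (idx k (Q ++ [:: x]) %% k = x)%N.
    by move=> Q x _ hx; rewrite idx_cat /= expn1 idx1 modnMDl modn_small.
  set P := g 1%N :: M.
  have dP : digs k P by rewrite /digs /= (yv_lt k0 y).
  have eL : g 1%N :: M ++ g m :: T = (P ++ [:: g m]) ++ T by rewrite -catA.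
  rewrite eL idx_div // idx_mod // hdivG ?hmodG ?(yv_lt k0 y) //.
  have hsw1 : (idx k P %% k ^ (i - 3) * k + idx k P %/ k ^ (i - 3))%N = idx k (M ++ [:: g 1%N]).
    by have := sw_cat k0 (dg 1%N) dM; rewrite sM /= expn1.
  rewrite hsw1.
  have dM1 : digs k (M ++ [:: g 1%N]) by apply: cat_digs.
  have hc : (idx k (M ++ [:: g 1%N]) * k + g m = idx k ((M ++ [:: g 1%N]) ++ [:: g m]))%N.
    by rewrite [RHS]idx_cat /= expn1 idx1.
  rewrite hc hdivG ?hmodG ?(yv_lt k0 y) //.
  have -> : g m :: M ++ g 1%N :: T = ([:: g m] ++ (M ++ [:: g 1%N])) ++ T by rewrite -!catA.
  rewrite !idx_cat size_cat sM /=.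
  rewrite (_ : (i - 3 + 1 = i - 2)%N); last by lia.
  by rewrite idx1.
have dimS : forall s : 'I_k, drows (stp (stp (DM (V i0)) (ddelta R s)) C) = 1%N /\
    dcols (stp (stp (DM (V i0)) (ddelta R s)) C) = (k ^ (n - 1))%N.
  move=> s; have [r1 c1 _] := hS1 s.
  by have [-> -> _] := stp_sq c1 rC (kpos _); rewrite r1 cC.
have yv0 : forall y : profile n k, yv y 0%N = y i0.
  by move=> y; have := yvE y i0; rewrite h0.
split.
  move=> hB y; have [J [hJ e1 e2]] := key y.
  rewrite !cE e1 e2 yv0.
  have hz := hS (y i0) J hJ.
  have [dr dc] := dimS (y i0).
  have S0 := (iffLR (dzeroP _) (hB (y i0))) 0%N J; rewrite dr dc in S0.
  by apply/eqP; rewrite -addr_eq0 -hz S0.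
move=> hB s; apply/dzeroP; have [-> ->] := dimS s.
move=> a j; rewrite ltnS leqn0 => /eqP -> hj.
rewrite hS //.
have [e [se de ie]] := idx_surj k0 hj.
have sl : size (nat_of_ord s :: e) = n by rewrite /= se; lia.
have dl : digs k (nat_of_ord s :: e) by rewrite /digs /= ltn_ord.
have [y hy] := xs_surj k0 sl dl.
have [J [hJ e1 e2]] := key y.
have ys : yv y 0%N = s.
  have : nth 0%N (xs y) 0 = yv y 0%N by rewrite /xs (nth_map 0%N) ?size_iota ?nth_iota //; lia.
  by rewrite hy.
have hJj : J = j.
  move: e1; rewrite hy idx_cons se ie ys => /eqP; rewrite eqn_add2l => /eqP ->. done.
have := hB y; rewrite !cE e1 e2 ys hJj => ->.
by rewrite addNr.
Qed.
End Game.


Section Perm.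
Variable R : realFieldType.
Variables n k : nat.

Definition good (d : 'I_n -> profile n k -> R) (s : 'S_n) :=
  forall i x, d i x = (-1) ^+ odd_perm s * d (s i) (fun j => x ((s^-1)%g j)).

Lemma good_mul d s r : good d s -> good d r -> good d (s * r)%g.
Proof.
move=> hs hr i x; rewrite hs hr odd_permM signr_addb mulrA permM.
congr (_ * d _ _); apply: functional_extensionality => j.
by rewrite invMg permM.
Qed.

Lemma good1 d : good d 1%g.
Proof.
move=> i x; rewrite odd_perm1 expr0 mul1r perm1.
congr (d _ _); apply: functional_extensionality => j; by rewrite invg1 perm1.
Qed.

Lemma good_all d : (forall a b, good d (tperm a b)) -> forall s, good d s.
Proof.
move=> h s; case: (prod_tpermP s) => ts -> _.
elim: ts => [|t ts IH]; first by rewrite big_nil; exact: good1.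
by rewrite big_cons; apply: good_mul.
Qed.

Lemma tperm_conj (a b c : 'I_n) : a != c -> b != c ->
  tperm b c = (tperm a b * tperm a c * tperm a b)%g.
Proof. by move=> ac bc; rewrite -(tpermJ_tperm ac bc) conjgE tpermV mulgA. Qed.

Variable c : 'I_n -> profile n k -> R.
Variables i0 i1 : 'I_n.
Hypothesis h0 : nat_of_ord i0 = 0%N.
Hypothesis h1 : nat_of_ord i1 = 1%N.

Let neq0 (a : 'I_n) : (a != i0) = (1 <= a)%N.
Proof. by rewrite -(inj_eq val_inj) /= h0 lt0n. Qed.

Let neq1 (a : 'I_n) : (a != i1) = (nat_of_ord a != 1%N).
Proof. by rewrite -(inj_eq val_inj) /= h1. Qed.

Definition condA' := forall i : 'I_n, (1 <= i)%N -> forall y, c i y = - c i0 (fun j => y (tperm i0 i j)).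
Definition condB' := forall m : 'I_n, (2 <= m)%N -> forall y, c i0 y = - c i0 (fun j => y (tperm i1 m j)).

Lemma skew_AB : skew_symmetric c -> condA' /\ condB'.
Proof.
move=> hs; split.
  move=> i hi y; rewrite (hs (tperm i0 i) i y) tpermR odd_tperm eq_sym neq0 hi expr1 mulN1r.
  by rewrite tpermV.
move=> m hm y; rewrite (hs (tperm i1 m) i0 y) odd_tperm.
have hm1 : i1 != m by rewrite eq_sym neq1; lia.
rewrite hm1 expr1 mulN1r tpermD ?tpermV //.
  by rewrite neq0 h1.
by rewrite neq0; lia.
Qed.

Lemma AB_skew : condA' -> condB' -> skew_symmetric c.
Proof.
move=> hA hB.
have hd1 : forall m, m != i0 -> m != i1 -> good (fun _ => c i0) (tperm i1 m).
  move=> m m0 m1 i x /=; rewrite odd_tperm (eq_sym i1 m) m1 expr1 mulN1r tpermV.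
  apply: hB; rewrite neq0 in m0; rewrite neq1 in m1; lia.
have hd : forall a b, a != i0 -> b != i0 -> good (fun _ => c i0) (tperm a b).
  move=> a b a0 b0; case: (eqVneq a b) => [->|ab]; first by rewrite tperm1; exact: good1.
  case: (eqVneq a i1) => [ea|a1].
    by rewrite ea; apply: hd1 => //; rewrite eq_sym -ea.
  case: (eqVneq b i1) => [eb|b1]; first by rewrite eb tpermC; apply: hd1.
  rewrite (tperm_conj (a := i1)) ?(eq_sym i1) //.
  by apply: good_mul; [apply: good_mul|]; apply: hd1.
have ht0 : forall m, m != i0 -> good c (tperm i0 m).
  move=> m m0 i x; rewrite odd_tperm (eq_sym i0 m) m0 expr1 mulN1r tpermV.
  have m1 : (1 <= m)%N by rewrite -neq0.
  case: (eqVneq i i0) => [->|ii0].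
    rewrite tpermL (hA m m1 (fun j => x (tperm i0 m j))) opprK.
    by congr (c i0 _); apply: functional_extensionality => j; rewrite tpermK.
  case: (eqVneq i m) => [->|im].
    by rewrite tpermR; apply: hA.
  have i1' : (1 <= i)%N by rewrite -neq0.
  rewrite tpermD ?(eq_sym i0) ?(eq_sym m) //.
  rewrite (hA i i1' x) (hA i i1' (fun j => x (tperm i0 m j))) opprK.
  have := hd i m ii0 m0 i0 (fun j => x (tperm i0 i j)).
  rewrite /= odd_tperm im expr1 mulN1r tpermV => ->.
  rewrite opprK; congr (c i0 _); apply: functional_extensionality => j.
  rewrite (tperm_conj (a := i0) (b := i) (c := m)) ?(eq_sym i0) //.
  by rewrite !permM tpermK.
have hc : forall a b, a != i0 -> b != i0 -> good c (tperm a b).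
  move=> a b a0 b0; case: (eqVneq a b) => [->|ab]; first by rewrite tperm1; exact: good1.
  rewrite (tperm_conj (a := i0)) ?(eq_sym i0) //.
  by apply: good_mul; [apply: good_mul|]; apply: ht0.
move=> s; apply: (good_all (d := c)) => a b.
case: (eqVneq a i0) => [->|a0].
  case: (eqVneq b i0) => [->|b0]; first by rewrite tperm1; exact: good1.
  exact: ht0.
case: (eqVneq b i0) => [->|b0]; first by rewrite tpermC; exact: ht0.
exact: hc.
Qed.

End Perm.


Unset Implicit Arguments.
Set Strict Implicit.

Theorem theorem3p10 (R : realFieldType) (n kappa : nat)
  (hn : (2 <= n)%N) (hk : (1 <= kappa)%N)
  (c : 'I_n -> profile n kappa -> R) (V : 'I_n -> 'rV[R]_(kappa ^ n))
  (hV : forall i, is_structure_vector (c i) (V i)) :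
  let V1 := DM (V (Ordinal (leq_trans (isT : (0 < 2)%N) hn))) in
  (* (A): for i = 2..n (paper indexing), i.e. index i' = i-1 in 'I_n *)
  let condA :=
    forall i : 'I_n, (2 <= i.+1)%N ->
      DM (V i) = dopp (stp (stp V1 (dswap R (kappa ^ (i.+1 - 2)) kappa))
                           (dswap R kappa (kappa ^ (i.+1 - 1)))) in
  (* (B): for s = 1..kappa and i = 3..n *)
  let condB :=
    forall (s : 'I_kappa) (i : nat), (3 <= i <= n)%N ->
      dzero (stp (stp V1 (ddelta R s))
                 (dadd (did R (kappa ^ (n - 1)))
                       (dkron (stp (dswap R (kappa ^ (i - 2)) kappa)
                                   (dswap R kappa (kappa ^ (i - 3))))
                              (did R (kappa ^ (n - i)))))) in
  ((n = 2)%N -> (skew_symmetric c <-> condA)) /\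
  ((2 < n)%N -> (skew_symmetric c <-> condA /\ condB)).
Proof.
move=> V1 condA condB.
pose i0 : 'I_n := Ordinal (leq_trans (isT : (0 < 2)%N) hn).
pose i1 : 'I_n := Ordinal hn.
have h0 : nat_of_ord i0 = 0%N by [].
have h1 : nat_of_ord i1 = 1%N by [].
have hA : condA <-> condA' c i0.
  split.
    by move=> h i hi; apply/(condA_iff hn hk hV h0 hi); apply: h.
  by move=> h i hi; apply/(condA_iff hn hk hV h0 hi); apply: h.
have hB : condB <-> condB' c i0 i1.
  split.
    move=> h m hm.
    have hi : (3 <= m.+1 <= n)%N by rewrite ltnS hm ltn_ord.
    by apply/(condB_pt hn hk hV h0 h1 hi (erefl _)) => s; apply: h.
  move=> h s i hi.
  have hm : (i.-1 < n)%N by case/andP: hi => ? ?; lia.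
  have H := condB_pt hn hk hV h0 h1 hi (erefl (nat_of_ord (Ordinal hm))).
  apply: (H.2 _ s); apply: h => /=; case/andP: hi => ? ?; lia.
split.
  move=> n2; split.
    by move=> /(skew_AB h0 h1) [? _]; apply/hA.
  move=> /hA hA'; apply: (AB_skew h0 h1 hA') => m hm.
  by have := ltn_ord m; lia.
move=> n3; split.
  by move=> /(skew_AB h0 h1) [? ?]; split; [apply/hA | apply/hB].
by case=> /hA hA' /hB hB'; apply: (AB_skew h0 h1 hA' hB').
Qed.
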